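(* Let $\mathcal{S}=\{S_1,\dots,S_N\}\subseteq 2^{[n]}$ be a nonempty Sperner family ($N\ge1$) and $h:\mathcal{S}\to 2^{[n]}$ a function with $H_i=h(S_i)\subseteq S_i$ for every $i\in[N]$. If $G_{\mathcal{S},h}$ is the complete graph on $N$ vertices, then there exists $S_0\in\mathcal{S}$ such that $\mathcal{Q}_{S_0,h(S_0)}\not\subseteq\bigcup_{S\in\mathcal{S}\setminus\{S_0\}}\mathcal{Q}_{S,h(S)}$.
   Context: $[n]=\{1,\dots,n\}$. A Sperner family is a family of sets none of which is contained in another. For $H\subseteq S\subseteq[n]$, $\mathcal{Q}_{S,H}=\{H\cup B: B\subseteq[n]\setminus S\}$. The graph $G_{\mathcal{S},h}$ has vertex set $\{(S_i,H_i): i\in[N]\}$, and two distinct vertices $(S_i,H_i)$, $(S_j,H_j)$ are adjacent if and only if $S_i\cap H_j=S_j\cap H_i$. *)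

(* Defs.v *)
From mathcomp Require Import all_boot.
Set Implicit Arguments. Unset Strict Implicit. Unset Printing Implicit Defensive.

Definition sperner (n : nat) (F : {set {set 'I_n}}) : Prop :=
  forall A B, A \in F -> B \in F -> A \subset B -> A = B.

Definition Qfam (n : nat) (S H : {set 'I_n}) : {set {set 'I_n}} :=
  [set H :|: B | B in powerset (~: S)].

Definition adjG (n : nat) (h : {set 'I_n} -> {set 'I_n}) (S T : {set 'I_n}) : Prop :=
  S :&: h T = T :&: h S.

Definition G_complete (n : nat) (F : {set {set 'I_n}}) (h : {set 'I_n} -> {set 'I_n}) : Prop :=
  forall S T, S \in F -> T \in F -> S <> T -> adjG h S T.

(* Main.v *)
Require Import Defs.
From mathcomp Require Import all_boot.

Theorem claim20 (n : nat) (F : {set {set 'I_n}}) (h : {set 'I_n} -> {set 'I_n}) :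
  F != set0 ->
  sperner F ->
  (forall S, S \in F -> h S \subset S) ->
  G_complete F h ->
  exists2 S0, S0 \in F &
    ~~ (Qfam S0 (h S0) \subset \bigcup_(S in F :\ S0) Qfam S (h S)).
Proof.
move=> /set0Pn [S0 S0F] Hsp Hsub Hc.
exists S0 => //.
set U := \bigcup_(S in F) h S.
set X := h S0 :|: (~: S0 :\: U).
apply/negP => /subsetP /(_ X) HX.
have XQ : X \in Qfam S0 (h S0).
  apply/imsetP; exists (~: S0 :\: U) => //.
  by rewrite inE; apply/subsetP => i; rewrite inE => /andP [].
move/bigcupP: (HX XQ) => [S /setD1P [SS0 SF] /imsetP [B]].
rewrite inE => /subsetP BS EX.
have SsubS0 : S \subset S0.
  apply/subsetP => i iS; apply/negPn/negP => iS0.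
  have iXe : (i \in X) = (i \in h S).
    rewrite EX inE; case: (boolP (i \in B)) => iB; last by rewrite orbF.
    by move: (BS i iB); rewrite inE iS.
  have iXe2 : (i \in X) = (i \notin U).
    rewrite /X !inE iS0 /=.
    case: (boolP (i \in h S0)) => // ih.
    by move/subsetP: (Hsub S0 S0F) => /(_ i ih); rewrite (negbTE iS0).
    by rewrite andbT.
  case: (boolP (i \in h S)) => ihS.
    have iU : i \in U by apply/bigcupP; exists S.
    by move: iXe2; rewrite iXe ihS iU.
  have : i \in U.
    by apply/negPn; rewrite -iXe2 iXe.
  move/bigcupP => [T TF iT].
  have TS : T <> S by move=> E; subst T; rewrite iT in ihS.
  have := Hc S T SF TF (fun E => TS (esym E)).
  rewrite /adjG => E.
  have : i \in S :&: h T by rewrite inE iS iT.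
  by rewrite E inE (negbTE ihS) andbF.
by move: SS0; rewrite (Hsp S S0 SF S0F SsubS0) eqxx.
Qed.
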